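(* Let $P:H_0(\tilde S_N)\to\operatorname{NDPF}^{(1)}_N$ be the monoid morphism with $P(\pi_i)=f_i$ for $i\in\{0,\dots,N-1\}$. For every $g\in \operatorname{NDPF}^{(1)}_N$, the fiber $\{w\in\tilde S_N: P(\pi_w)=g\}$ contains a unique $[321]$-avoiding affine permutation.
   Context: $\tilde S_N$ is the group of bijections $\sigma:\mathbb{Z}\to\mathbb{Z}$ with $\sigma(i+N)=\sigma(i)+N$ and $\sum_{i=1}^N\sigma(i)=\binom{N+1}{2}$, generated by $s_0,\dots,s_{N-1}$ where $s_i$ exchanges $j,j+1$ for all $j\equiv i\pmod N$ (indices mod $N$). $H_0(\tilde S_N)$ is generated by $\pi_i$, $i\in\mathbb{Z}/N$, with $\pi_i^2=\pi_i$, $\pi_i\pi_j=\pi_j\pi_i$ for $i,j$ non-adjacent mod $N$, and $\pi_i\pi_{i+1}\pi_i=\pi_{i+1}\pi_i\pi_{i+1}$; $\pi_w=\pi_{i_1}\cdots\pi_{i_k}$ for a reduced word $w=s_{i_1}\cdots s_{i_k}$, a bijection with $\tilde S_N$. An affine permutation $x$ is $[321]$-avoiding if there are no integers $a<b<c$ with $x(a)>x(b)>x(c)$. $\operatorname{NDPF}^{(1)}_N$ is the set of $f:\mathbb{Z}\to\mathbb{Z}$ that are regressive ($f(i)\le i$), order preserving and skew periodic ($f(i+N)=f(i)+N$), other than the shifts $i\mapsto i-t$ with $t\ne0$; functions act on the right, so $j.(fg)=(j.f).g$ (apply $f$ first). For $i\in\{0,\dots,N-1\}$, $f_i$ is the function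 with $f_i(j)=j-1$ if $j\equiv i+1\pmod N$ and $f_i(j)=j$ otherwise. *)

(* Defs.v *)
From Stdlib Require Import ZArith List Lia.
Import ListNotations.
Open Scope Z_scope.

Definition is_affine_perm (N : nat) (x : Z -> Z) : Prop :=
  (forall a b, x a = x b -> a = b) /\
  (forall y, exists a, x a = y) /\
  (forall i, x (i + Z.of_nat N) = x i + Z.of_nat N) /\
  fold_right Z.add 0 (map (fun k : nat => x (Z.of_nat k)) (seq 1 N))
    = Z.of_nat N * (Z.of_nat N + 1) / 2.

Definition s_gen (N : nat) (i : nat) (j : Z) : Z :=
  if (j mod Z.of_nat N =? Z.of_nat i mod Z.of_nat N) then j + 1
  else if (j mod Z.of_nat N =? (Z.of_nat i + 1) mod Z.of_nat N) then j - 1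
  else j.

Definition word_perm (N : nat) (w : list nat) : Z -> Z :=
  fold_right (fun i f => fun j => s_gen N i (f j)) (fun j => j) w.

Definition valid_word (N : nat) (w : list nat) : Prop :=
  Forall (fun i => (i < N)%nat) w.

Definition represents (N : nat) (w : list nat) (x : Z -> Z) : Prop :=
  valid_word N w /\ forall j, word_perm N w j = x j.

Definition reduced_word (N : nat) (w : list nat) (x : Z -> Z) : Prop :=
  represents N w x /\
  forall w', represents N w' x -> (length w <= length w')%nat.

Definition avoids321 (x : Z -> Z) : Prop :=
  ~ exists a b c, a < b /\ b < c /\ x a > x b /\ x b > x c.

Definition f_gen (N : nat) (i : nat) (j : Z) : Z :=
  if (j mod Z.of_nat N =? (Z.of_nat i + 1) mod Z.of_nat N) then j - 1 else j.

(** The product f_{i1} ... f_{ik} with functions acting on the right: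
    j.(f g) = (j.f).g, i.e. f_{i1} is applied first. *)
Definition f_word (N : nat) (w : list nat) (j : Z) : Z :=
  fold_left (fun acc i => f_gen N i acc) w j.

Definition is_NDPF1 (N : nat) (g : Z -> Z) : Prop :=
  (forall i, g i <= i) /\
  (forall i j, i <= j -> g i <= g j) /\
  (forall i, g (i + Z.of_nat N) = g i + Z.of_nat N) /\
  ~ (exists t, t <> 0 /\ forall i, g i = i - t).

(** x lies in the fiber of g under w |-> P(pi_w): P(pi_w) = f_{i1}...f_{ik}
    for a reduced word s_{i1}...s_{ik} of w. *)
Definition in_fiber (N : nat) (g : Z -> Z) (x : Z -> Z) : Prop :=
  exists w, reduced_word N w x /\ forall j, f_word N w j = g j.

(* Main.v *)
Require Import Defs.
From Stdlib Require Import ZArith List Lia Permutation IndefiniteDescription Classical FunctionalExtensionality.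
Import ListNotations.
Open Scope Z_scope.


Lemma mod_eq_iff (n a b : Z) : 0 < n -> (a mod n = b mod n <-> exists k, a = b + k * n).
Proof.
  intros Hn; split.
  - intros H. exists (a / n - b / n).
    pose proof (Z.div_mod a n ltac:(lia)). pose proof (Z.div_mod b n ltac:(lia)).
    rewrite Z.mul_sub_distr_r.
    rewrite (Z.mul_comm (a/n)), (Z.mul_comm (b/n)). lia.
  - intros [k ->]. rewrite Z_mod_plus_full. reflexivity.
Qed.

Lemma mod_add_n (n a : Z) : 0 < n -> (a + n) mod n = a mod n.
Proof. intros. apply mod_eq_iff; auto. exists 1; lia. Qed.

Lemma mod_shift (n a b c : Z) : 0 < n -> a mod n = b mod n -> (a + c) mod n = (b + c) mod n.
Proof. intros Hn H. apply mod_eq_iff in H; auto. destruct H as [k Hk]. apply mod_eq_iff; auto. exists k; lia. Qed.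

Lemma mod_neq_succ (n a : Z) : 2 <= n -> a mod n <> (a + 1) mod n.
Proof. intros Hn H. apply mod_eq_iff in H; [|lia]. destruct H as [k Hk]. destruct (Z_le_gt_dec 0 k); nia. Qed.

Lemma per_k (n : Z) (h : Z -> Z) (d : Z) :
  (forall a, h (a + n) = h a + d) -> forall k a, h (a + k * n) = h a + k * d.
Proof.
  intros H k. induction k using Z.peano_ind; intros a.
  - rewrite !Z.mul_0_l, !Z.add_0_r. reflexivity.
  - replace (a + Z.succ k * n) with ((a + k * n) + n) by lia.
    rewrite H, IHk. lia.
  - specialize (IHk a). specialize (H (a + Z.pred k * n)).
    replace (a + Z.pred k * n + n) with (a + k * n) in H by lia.
    lia.
Qed.

Lemma per_kb (n : Z) (p : Z -> bool) :
  (forall a, p (a + n) = p a) -> forall k a, p (a + k * n) = p a.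
Proof.
  intros H k. induction k using Z.peano_ind; intros a.
  - rewrite Z.mul_0_l, Z.add_0_r. reflexivity.
  - replace (a + Z.succ k * n) with ((a + k * n) + n) by lia. rewrite H; auto.
  - rewrite <- (H (a + Z.pred k * n)).
    replace (a + Z.pred k * n + n) with (a + k * n) by lia. apply IHk.
Qed.

Lemma decomp (n c b : Z) : 0 < n -> exists r k, c <= r < c + n /\ b = r + k * n.
Proof.
  intros Hn. exists (c + (b - c) mod n), ((b - c) / n).
  pose proof (Z.mod_pos_bound (b - c) n Hn). pose proof (Z.div_mod (b - c) n ltac:(lia)).
  split; [lia|]. rewrite (Z.mul_comm ((b-c)/n)). lia.
Qed.

Lemma sgen_cases (N i : nat) (j : Z) :
  (j mod Z.of_nat N = Z.of_nat i mod Z.of_nat N /\ s_gen N i j = j + 1) \/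
  (j mod Z.of_nat N <> Z.of_nat i mod Z.of_nat N /\
   j mod Z.of_nat N = (Z.of_nat i + 1) mod Z.of_nat N /\ s_gen N i j = j - 1) \/
  (j mod Z.of_nat N <> Z.of_nat i mod Z.of_nat N /\
   j mod Z.of_nat N <> (Z.of_nat i + 1) mod Z.of_nat N /\ s_gen N i j = j).
Proof.
  unfold s_gen.
  destruct (Z.eqb_spec (j mod Z.of_nat N) (Z.of_nat i mod Z.of_nat N)); [left; auto|].
  destruct (Z.eqb_spec (j mod Z.of_nat N) ((Z.of_nat i + 1) mod Z.of_nat N)); right; [left|right]; auto.
Qed.

Lemma sgen_per (N i : nat) (j : Z) : (1 <= N)%nat ->
  s_gen N i (j + Z.of_nat N) = s_gen N i j + Z.of_nat N.
Proof.
  intros HN. unfold s_gen. rewrite mod_add_n by lia.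
  destruct (_ =? _); [lia|]. destruct (_ =? _); lia.
Qed.

Lemma sgen_invol (N i : nat) (j : Z) : (2 <= N)%nat -> s_gen N i (s_gen N i j) = j.
Proof.
  intros HN.
  assert (Hn : 2 <= Z.of_nat N) by lia.
  destruct (sgen_cases N i j) as [[H1 H2]|[[H0 [H1 H2]]|[H0 [H1 H2]]]]; rewrite H2.
  - destruct (sgen_cases N i (j+1)) as [[K1 K2]|[[K0 [K1 K2]]|[K0 [K1 K2]]]].
    + exfalso. apply (mod_neq_succ (Z.of_nat N) j); lia.
    + lia.
    + exfalso. apply K1. apply mod_shift; [lia|auto].
  - destruct (sgen_cases N i (j-1)) as [[K1 K2]|[[K0 [K1 K2]]|[K0 [K1 K2]]]].
    + lia.
    + exfalso. apply K0. apply (mod_shift _ _ _ (-1)) in H1; [|lia].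
      replace (j + -1) with (j - 1) in H1 by lia. rewrite H1. f_equal. lia.
    + exfalso. apply K0. apply (mod_shift _ _ _ (-1)) in H1; [|lia].
      replace (j + -1) with (j - 1) in H1 by lia. rewrite H1. f_equal. lia.
  - rewrite H2. reflexivity.
Qed.

Lemma sgen_inj (N i : nat) (a b : Z) : (2 <= N)%nat -> s_gen N i a = s_gen N i b -> a = b.
Proof. intros HN H. rewrite <- (sgen_invol N i a), <- (sgen_invol N i b), H; auto. Qed.

Lemma sgen_le (N i : nat) (a : Z) : s_gen N i a <= a + 1.
Proof. destruct (sgen_cases N i a) as [[_ H]|[[_ [_ H]]|[_ [_ H]]]]; lia. Qed.

Lemma word_perm_app (N : nat) (u : list nat) (i : nat) (j : Z) :
  word_perm N (u ++ [i]) j = word_perm N u (s_gen N i j).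
Proof. induction u as [|a u IH]; simpl; [reflexivity|]. rewrite IH. reflexivity. Qed.

Lemma word_perm_per (N : nat) (w : list nat) (j : Z) : (1 <= N)%nat ->
  word_perm N w (j + Z.of_nat N) = word_perm N w j + Z.of_nat N.
Proof. intros HN. induction w as [|a w IH]; simpl; [reflexivity|]. rewrite IH, sgen_per; auto. Qed.

Lemma word_perm_inj (N : nat) (w : list nat) (a b : Z) : (2 <= N)%nat ->
  word_perm N w a = word_perm N w b -> a = b.
Proof. intros HN. induction w as [|c w IH]; simpl; auto. intros H. apply sgen_inj in H; auto. Qed.

Lemma f_word_app (N : nat) (u : list nat) (i : nat) (j : Z) :
  f_word N (u ++ [i]) j = f_gen N i (f_word N u j).
Proof. unfold f_word. rewrite fold_left_app. reflexivity. Qed.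


Fixpoint zsum (f : Z -> Z) (c : Z) (n : nat) : Z :=
  match n with O => 0 | S n => f c + zsum f (c + 1) n end.
Fixpoint zlist (c : Z) (n : nat) : list Z :=
  match n with O => [] | S n => c :: zlist (c + 1) n end.

Lemma zsum_list f c n : zsum f c n = fold_right Z.add 0 (map f (zlist c n)).
Proof. revert c; induction n; simpl; intros; auto. rewrite IHn; auto. Qed.

Lemma in_zlist c n a : In a (zlist c n) <-> c <= a < c + Z.of_nat n.
Proof.
  revert c; induction n; simpl; intros c; [lia|].
  rewrite IHn. lia.
Qed.

Lemma zlist_nodup c n : NoDup (zlist c n).
Proof.
  revert c; induction n; simpl; intros c; constructor; auto.
  rewrite in_zlist. lia.
Qed.

Lemma zlist_length c n : length (zlist c n) = n.
Proof. revert c; induction n; simpl; auto. Qed.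

Lemma defs_sum (x : Z -> Z) m n :
  fold_right Z.add 0 (map (fun k : nat => x (Z.of_nat k)) (seq m n)) = zsum x (Z.of_nat m) n.
Proof.
  revert m; induction n; intros m; simpl; auto. rewrite IHn. f_equal. f_equal. f_equal. lia.
Qed.

Lemma zsum_last f c n : zsum f c (S n) = zsum f c n + f (c + Z.of_nat n).
Proof.
  revert c; induction n; intros c.
  - simpl. rewrite !Z.add_0_r. lia.
  - change (zsum f c (S (S n))) with (f c + zsum f (c+1) (S n)). rewrite IHn.
    change (zsum f c (S n)) with (f c + zsum f (c+1) n).
    replace (c + 1 + Z.of_nat n) with (c + Z.of_nat (S n)) by lia. lia.
Qed.

Lemma zsum_ext f h c n : (forall a, c <= a < c + Z.of_nat n -> f a = h a) -> zsum f c n = zsum h c n.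
Proof.
  revert c; induction n; intros c H; simpl; auto.
  rewrite H by lia. rewrite IHn; auto. intros; apply H; lia.
Qed.

Lemma zsum_plus f h c n : zsum (fun a => f a + h a) c n = zsum f c n + zsum h c n.
Proof. revert c; induction n; intros c; simpl; auto. rewrite IHn. lia. Qed.

Lemma zsum_const k c n : zsum (fun _ => k) c n = Z.of_nat n * k.
Proof. revert c; induction n; intros c; [reflexivity|]. change (zsum (fun _ => k) c (S n)) with (k + zsum (fun _ => k) (c+1) n). rewrite IHn. rewrite Nat2Z.inj_succ. ring. Qed.

Lemma zsum_le f h c n : (forall a, c <= a < c + Z.of_nat n -> f a <= h a) -> zsum f c n <= zsum h c n.
Proof.
  revert c; induction n; intros c H; simpl; [lia|].
  assert (zsum f (c+1) n <= zsum h (c+1) n) by (apply IHn; intros; apply H; lia).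
  specialize (H c ltac:(lia)). lia.
Qed.

Lemma zsum_lt f h c n : (forall a, c <= a < c + Z.of_nat n -> f a <= h a) ->
  (exists a, c <= a < c + Z.of_nat n /\ f a < h a) -> zsum f c n < zsum h c n.
Proof.
  revert c; induction n; intros c H [a [Ha Hlt]]; simpl; [lia|].
  destruct (Z.eq_dec a c) as [->|Hne].
  - assert (zsum f (c+1) n <= zsum h (c+1) n) by (apply zsum_le; intros; apply H; lia). lia.
  - assert (zsum f (c+1) n < zsum h (c+1) n).
    { apply IHn. intros; apply H; lia. exists a; split; auto; lia. }
    specialize (H c ltac:(lia)). lia.
Qed.

Lemma zsum_eq_pt f h c n : (forall a, c <= a < c + Z.of_nat n -> f a <= h a) ->
  zsum f c n = zsum h c n -> forall a, c <= a < c + Z.of_nat n -> f a = h a.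
Proof.
  intros H E a Ha. destruct (Z.eq_dec (f a) (h a)); auto.
  exfalso. assert (zsum f c n < zsum h c n); [|lia].
  apply zsum_lt; auto. exists a; split; auto. specialize (H a Ha). lia.
Qed.

Lemma zsum_shift f c n : zsum f (c + 1) n = zsum f c n - f c + f (c + Z.of_nat n).
Proof.
  pose proof (zsum_last f c n). simpl in H. lia.
Qed.

Lemma fold_perm (l l' : list Z) : Permutation l l' -> fold_right Z.add 0 l = fold_right Z.add 0 l'.
Proof. induction 1; simpl; lia. Qed.

Lemma nodup_map_inj (h : Z -> Z) (l : list Z) :
  NoDup l -> (forall a b, In a l -> In b l -> h a = h b -> a = b) -> NoDup (map h l).
Proof.
  induction l as [|a l IH]; simpl; intros Hnd Hinj; constructor.
  - intros Hin. apply in_map_iff in Hin. destruct Hin as [b [Hb Hbin]].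
    inversion Hnd; subst. assert (b = a) by (apply Hinj; auto). subst; contradiction.
  - inversion Hnd; subst. apply IH; auto.
Qed.

Lemma zsum_perm (h : Z -> Z) c n :
  (forall a, c <= a < c + Z.of_nat n -> c <= h a < c + Z.of_nat n) ->
  (forall a b, c <= a < c + Z.of_nat n -> c <= b < c + Z.of_nat n -> h a = h b -> a = b) ->
  zsum h c n = zsum (fun a => a) c n.
Proof.
  intros Hr Hi. rewrite !zsum_list. rewrite map_id. apply fold_perm.
  apply NoDup_Permutation_bis.
  - apply nodup_map_inj. apply zlist_nodup. intros a b Ha Hb. apply in_zlist in Ha, Hb. auto.
  - rewrite length_map. lia.
  - intros v Hv. apply in_map_iff in Hv. destruct Hv as [a [<- Ha]]. apply in_zlist in Ha. apply in_zlist. auto.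
Qed.

Lemma zsum_id n : zsum (fun a => a) 1 n = Z.of_nat n * (Z.of_nat n + 1) / 2.
Proof.
  assert (H : 2 * zsum (fun a => a) 1 n = Z.of_nat n * (Z.of_nat n + 1)).
  { induction n; [reflexivity|]. rewrite zsum_last. rewrite Z.mul_add_distr_l, IHn. lia. }
  rewrite <- H. rewrite Z.mul_comm. rewrite Z.div_mul; lia.
Qed.

Lemma zsum_mult f m c n : (forall a, c <= a < c + Z.of_nat n -> exists k, f a = k * m) ->
  exists K, zsum f c n = K * m.
Proof.
  revert c; induction n; intros c H; simpl.
  - exists 0; lia.
  - destruct (H c ltac:(lia)) as [k1 Hk1]. destruct (IHn (c+1)) as [K HK].
    { intros; apply H; lia. }
    exists (k1 + K). rewrite Hk1, HK. lia.
Qed.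


Definition periodic (N : nat) (y : Z -> Z) := forall a, y (a + Z.of_nat N) = y a + Z.of_nat N.

Definition Fz (N : nat) (y : Z -> Z) (a b : Z) : Z :=
  Z.max 0 ((y a - y b - 1) / Z.of_nat N - (a - b) / Z.of_nat N).
Definition PhiW (N : nat) (y : Z -> Z) (c : Z) : Z :=
  zsum (fun a => zsum (fun b => Fz N y a b) c N) c N.
Definition Phi (N : nat) (y : Z -> Z) : Z := PhiW N y 0.

Lemma div_plus_n (n x : Z) : 0 < n -> (x + n) / n = x / n + 1.
Proof. intros. replace (x + n) with (x + 1 * n) by lia. apply Z_div_plus_full. lia. Qed.

Lemma div_m1 (n x : Z) : 0 < n -> -n <= x < 0 -> x / n = -1.
Proof. intros. symmetry. apply Z.div_unique with (x + n); lia. Qed.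

Lemma div_0 (n x : Z) : 0 < n -> 0 <= x < n -> x / n = 0.
Proof. intros. apply Z.div_small; lia. Qed.

Lemma div_negative (n x : Z) : 0 < n -> x < 0 -> x / n < 0.
Proof. intros. apply Z.div_lt_upper_bound; lia. Qed.

Lemma div_nonneg (n x : Z) : 0 < n -> 0 <= x -> 0 <= x / n.
Proof. intros. apply Z.div_pos; lia. Qed.

Lemma Fz_perA N y a b : (1 <= N)%nat -> periodic N y -> Fz N y (a + Z.of_nat N) b = Fz N y a b.
Proof.
  intros HN Hp. unfold Fz. rewrite Hp.
  replace (y a + Z.of_nat N - y b - 1) with ((y a - y b - 1) + Z.of_nat N) by lia.
  replace (a + Z.of_nat N - b) with ((a - b) + Z.of_nat N) by lia.
  rewrite !div_plus_n by lia. f_equal. lia.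
Qed.

Lemma Fz_perB N y a b : (1 <= N)%nat -> periodic N y -> Fz N y a (b + Z.of_nat N) = Fz N y a b.
Proof.
  intros HN Hp. unfold Fz. rewrite Hp.
  replace (y a - (y b + Z.of_nat N) - 1) with ((y a - y b - 1) - Z.of_nat N) by lia.
  replace (a - (b + Z.of_nat N)) with ((a - b) - Z.of_nat N) by lia.
  assert (H1 : (y a - y b - 1) / Z.of_nat N = (y a - y b - 1 - Z.of_nat N) / Z.of_nat N + 1).
  { rewrite <- div_plus_n by lia. f_equal; lia. }
  assert (H2 : (a - b) / Z.of_nat N = (a - b - Z.of_nat N) / Z.of_nat N + 1).
  { rewrite <- div_plus_n by lia. f_equal; lia. }
  rewrite H1, H2. lia.
Qed.

Lemma PhiW_shift N y c : (1 <= N)%nat -> periodic N y -> PhiW N y (c + 1) = PhiW N y c.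
Proof.
  intros HN Hp. unfold PhiW.
  rewrite (zsum_ext _ (fun a => zsum (fun b => Fz N y a b) c N)).
  2:{ intros a _. rewrite zsum_shift. rewrite Fz_perB; auto. lia. }
  rewrite zsum_shift.
  rewrite (zsum_ext (fun b => Fz N y (c + Z.of_nat N) b) (fun b => Fz N y c b)).
  2:{ intros b _. apply Fz_perA; auto. }
  lia.
Qed.

Lemma PhiW_any N y c : (1 <= N)%nat -> periodic N y -> PhiW N y c = Phi N y.
Proof.
  intros HN Hp. unfold Phi. induction c using Z.peano_ind; auto.
  - rewrite <- Z.add_1_r, PhiW_shift; auto.
  - rewrite <- IHc. rewrite <- (PhiW_shift N y (Z.pred c)); auto. f_equal; lia.
Qed.

Lemma Fz_nonneg N y a b : 0 <= Fz N y a b.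
Proof. unfold Fz; lia. Qed.

Lemma zsum_nonneg f c n : (forall a, 0 <= f a) -> 0 <= zsum f c n.
Proof. revert c; induction n; intros c H; simpl; [lia|]. specialize (IHn (c+1) H). specialize (H c). lia. Qed.

Lemma Phi_nonneg N y : 0 <= Phi N y.
Proof.
  unfold Phi, PhiW. apply zsum_nonneg. intros a. apply zsum_nonneg. intros; apply Fz_nonneg.
Qed.

Lemma Fz_id N a b : (1 <= N)%nat -> Fz N (fun j => j) a b = 0.
Proof.
  intros HN. unfold Fz. assert ((a - b - 1) / Z.of_nat N <= (a - b) / Z.of_nat N).
  { apply Z.div_le_mono; lia. } lia.
Qed.

Lemma Phi_id N : (1 <= N)%nat -> Phi N (fun j => j) = 0.
Proof.
  intros HN. unfold Phi, PhiW.
  rewrite (zsum_ext _ (fun _ => 0)). rewrite zsum_const; lia.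
  intros a _. rewrite (zsum_ext _ (fun _ => 0)). rewrite zsum_const; lia.
  intros; apply Fz_id; auto.
Qed.

Lemma Fz_diag N y a : (2 <= N)%nat -> Fz N y a a = 0.
Proof.
  intros HN. unfold Fz. replace (y a - y a - 1) with (-1) by lia. replace (a - a) with 0 by lia.
  rewrite (div_m1 _ (-1)) by lia. rewrite Z.div_0_l by lia. lia.
Qed.

Lemma mod_window (n x d : Z) : 0 < d < n -> (x + d) mod n <> x mod n.
Proof. intros Hd H. apply mod_eq_iff in H; [|lia]. destruct H as [k Hk].
  destruct (Z_le_gt_dec k 0); nia. Qed.

Lemma periodic_sgen N y i : (1 <= N)%nat -> periodic N y -> periodic N (fun a => y (s_gen N i a)).
Proof. intros HN Hp a. simpl. rewrite sgen_per; auto. Qed.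

Lemma zsum_SS f c M : zsum f c (S (S M)) = f c + (f (c + 1) + zsum f (c + 1 + 1) M).
Proof. reflexivity. Qed.

Lemma Phi_diff N y i : (3 <= N)%nat -> periodic N y -> (i < N)%nat ->
  let u := Z.of_nat i in let y' := fun a => y (s_gen N i a) in
  Phi N y' = Phi N y + (Fz N y' u (u+1) + Fz N y' (u+1) u - Fz N y u (u+1) - Fz N y (u+1) u).
Proof.
  intros HN Hp Hi u y'.
  assert (Hn : 3 <= Z.of_nat N) by lia.
  assert (Hsu : s_gen N i u = u + 1).
  { destruct (sgen_cases N i u) as [[_ H]|[[H _]|[H _]]]; auto; exfalso; apply H; reflexivity. }
  assert (Hsv : s_gen N i (u + 1) = u).
  { destruct (sgen_cases N i (u+1)) as [[H _]|[[_ [_ H]]|[_ [H _]]]].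
    - exfalso. apply (mod_neq_succ (Z.of_nat N) u); [lia|]. auto.
    - lia.
    - exfalso. apply H. reflexivity. }
  assert (HsR : forall a, u + 2 <= a < u + Z.of_nat N -> s_gen N i a = a).
  { intros a Ha. destruct (sgen_cases N i a) as [[H _]|[[_ [H _]]|[_ [_ H]]]]; auto.
    - exfalso. apply (mod_window (Z.of_nat N) u (a - u)); [lia|]. replace (u + (a - u)) with a by lia. auto.
    - exfalso. apply (mod_window (Z.of_nat N) (u+1) (a - u - 1)); [lia|].
      replace (u + 1 + (a - u - 1)) with a by lia. auto. }
  assert (Yu : y' u = y (u+1)) by (unfold y'; rewrite Hsu; auto).
  assert (Yv : y' (u+1) = y u) by (unfold y'; rewrite Hsv; auto).
  assert (YR : forall a, u + 2 <= a < u + Z.of_nat N -> y' a = y a) by (intros; unfold y'; rewrite HsR; auto).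
  assert (E1 : forall a b, u + 2 <= a < u + Z.of_nat N -> u + 2 <= b < u + Z.of_nat N -> Fz N y' a b = Fz N y a b).
  { intros a b Ha Hb. unfold Fz. rewrite YR, (YR b); auto. }
  assert (E2a : forall b, u + 2 <= b < u + Z.of_nat N -> Fz N y' u b = Fz N y (u+1) b).
  { intros b Hb. unfold Fz. rewrite Yu, YR by auto.
    rewrite (div_m1 _ (u - b)), (div_m1 _ (u + 1 - b)) by lia. reflexivity. }
  assert (E2b : forall b, u + 2 <= b < u + Z.of_nat N -> Fz N y' (u+1) b = Fz N y u b).
  { intros b Hb. unfold Fz. rewrite Yv, YR by auto.
    rewrite (div_m1 _ (u - b)), (div_m1 _ (u + 1 - b)) by lia. reflexivity. }
  assert (E3a : forall a, u + 2 <= a < u + Z.of_nat N -> Fz N y' a u = Fz N y a (u+1)).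
  { intros a Ha. unfold Fz. rewrite Yu, YR by auto.
    rewrite (div_0 _ (a - u)), (div_0 _ (a - (u + 1))) by lia. reflexivity. }
  assert (E3b : forall a, u + 2 <= a < u + Z.of_nat N -> Fz N y' a (u+1) = Fz N y a u).
  { intros a Ha. unfold Fz. rewrite Yv, YR by auto.
    rewrite (div_0 _ (a - u)), (div_0 _ (a - (u + 1))) by lia. reflexivity. }
  assert (Hp' : periodic N y') by (apply periodic_sgen; auto; lia).
  rewrite <- (PhiW_any N y' u), <- (PhiW_any N y u) by (auto; lia).
  unfold PhiW. destruct N as [|[|M]]; [lia|lia|].
  rewrite !zsum_SS.
  replace (u + 1 + 1) with (u + 2) by lia.
  assert (HM : u + 2 + Z.of_nat M = u + Z.of_nat (S (S M))) by lia.
  rewrite (zsum_ext (fun b => Fz (S (S M)) y' u b) (fun b => Fz (S (S M)) y (u+1) b))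
    by (intros; apply E2a; lia).
  rewrite (zsum_ext (fun b => Fz (S (S M)) y' (u+1) b) (fun b => Fz (S (S M)) y u b))
    by (intros; apply E2b; lia).
  rewrite (zsum_ext (fun a => zsum (fun b => Fz (S (S M)) y' a b) u (S (S M)))
     (fun a => zsum (fun b => Fz (S (S M)) y a b) u (S (S M)))).
  2:{ intros a Ha. rewrite !zsum_SS. replace (u + 1 + 1) with (u + 2) by lia.
      rewrite E3a, E3b by lia.
      rewrite (zsum_ext (fun b => Fz (S (S M)) y' a b) (fun b => Fz (S (S M)) y a b)).
      lia. intros; apply E1; lia. }
  rewrite !Fz_diag by lia. lia.
Qed.

Lemma sgen_u N i : (2 <= N)%nat -> s_gen N i (Z.of_nat i) = Z.of_nat i + 1.
Proof. intros HN. destruct (sgen_cases N i (Z.of_nat i)) as [[_ H]|[[H _]|[H _]]]; auto; exfalso; apply H; reflexivity. Qed.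

Lemma sgen_v N i : (2 <= N)%nat -> s_gen N i (Z.of_nat i + 1) = Z.of_nat i.
Proof.
  intros HN. destruct (sgen_cases N i (Z.of_nat i+1)) as [[H _]|[[_ [_ H]]|[_ [H _]]]].
  - exfalso. apply (mod_neq_succ (Z.of_nat N) (Z.of_nat i)); [lia|]. auto.
  - lia.
  - exfalso. apply H. reflexivity.
Qed.

Lemma Phi_step N y i : (3 <= N)%nat -> periodic N y -> (i < N)%nat ->
  y (Z.of_nat i) <> y (Z.of_nat i + 1) ->
  Phi N (fun a => y (s_gen N i a)) =
  Phi N y + (if y (Z.of_nat i) <? y (Z.of_nat i + 1) then 1 else -1).
Proof.
  intros HN Hp Hi Hne. rewrite Phi_diff; auto.
  set (u := Z.of_nat i) in *. unfold Fz.
  rewrite sgen_u, sgen_v by lia. fold u.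
  replace (u - (u + 1)) with (-1) by lia. replace (u + 1 - u) with 1 by lia.
  rewrite (div_m1 _ (-1)) by lia. rewrite (div_0 _ 1) by lia.
  set (d := y (u+1) - y u).
  replace (y (u + 1) - y u - 1) with (d - 1) by (unfold d; lia).
  replace (y u - y (u + 1) - 1) with (-d - 1) by (unfold d; lia).
  destruct (Z.ltb_spec (y u) (y (u+1))).
  - assert (0 <= (d - 1) / Z.of_nat N) by (apply div_nonneg; unfold d; lia).
    assert ((-d - 1) / Z.of_nat N < 0) by (apply div_negative; unfold d; lia).
    lia.
  - assert ((d - 1) / Z.of_nat N < 0) by (apply div_negative; unfold d; lia).
    assert (0 <= (-d - 1) / Z.of_nat N) by (apply div_nonneg; unfold d; lia).
    lia.
Qed.


Lemma word_perm_periodic N w : (1 <= N)%nat -> periodic N (word_perm N w).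
Proof. intros HN a. apply word_perm_per; auto. Qed.

Lemma word_perm_app_f N u i : word_perm N (u ++ [i]) = fun j => word_perm N u (s_gen N i j).
Proof. apply functional_extensionality; intros; apply word_perm_app. Qed.

Lemma lower_bound N w : (3 <= N)%nat -> valid_word N w ->
  Phi N (word_perm N w) <= Z.of_nat (length w).
Proof.
  intros HN. induction w as [|i u IH] using rev_ind; intros Hv.
  - simpl. change (word_perm N []) with (fun j : Z => j). rewrite Phi_id; lia.
  - unfold valid_word in Hv. apply Forall_app in Hv. destruct Hv as [Hu Hi]. inversion Hi; subst.
    rewrite word_perm_app_f. rewrite Phi_step; auto.
    + rewrite length_app. simpl. specialize (IH Hu).
      destruct (_ <? _); lia.
    + apply word_perm_periodic; lia.
    + intros E. apply word_perm_inj in E; lia.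
Qed.

Lemma zsum_minus f h c n : zsum (fun a => f a - h a) c n = zsum f c n - zsum h c n.
Proof. revert c; induction n; intros c; simpl; auto. rewrite IHn. lia. Qed.

Lemma window_inv N x c : (1 <= N)%nat -> periodic N x ->
  zsum (fun a => x a - a) c N = zsum (fun a => x a - a) 0 N.
Proof.
  intros HN Hp. induction c using Z.peano_ind; auto.
  - rewrite <- Z.add_1_r, zsum_shift, Hp. rewrite <- IHc. lia.
  - rewrite <- IHc. replace c with (Z.pred c + 1) at 2 by lia.
    rewrite zsum_shift, Hp. lia.
Qed.

Lemma aff_window N x c : (1 <= N)%nat -> is_affine_perm N x ->
  zsum x c N = zsum (fun a => a) c N.
Proof.
  intros HN [Hi [Hs [Hp Hsum]]].
  assert (Hp' : periodic N x) by exact Hp.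
  rewrite defs_sum in Hsum. simpl in Hsum. rewrite <- zsum_id in Hsum.
  pose proof (window_inv N x c HN Hp'). pose proof (window_inv N x 1 HN Hp').
  rewrite !zsum_minus in *. lia.
Qed.

Lemma aff_of_window N x c : (1 <= N)%nat ->
  (forall a b, x a = x b -> a = b) -> (forall y, exists a, x a = y) -> periodic N x ->
  zsum x c N = zsum (fun a => a) c N -> is_affine_perm N x.
Proof.
  intros HN Hi Hs Hp Hc. split; [auto|split;[auto|split;[exact Hp|]]].
  rewrite defs_sum. simpl. rewrite <- zsum_id.
  pose proof (window_inv N x c HN Hp). pose proof (window_inv N x 1 HN Hp).
  rewrite !zsum_minus in *. lia.
Qed.

Lemma tele (h : Z -> Z) d p : 1 <= p -> (forall j, h j + d <= h (j+1)) ->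
  (forall j, h (j + p) = h j + p * d) -> forall j, h (j + 1) = h j + d.
Proof.
  intros Hp Hs Hper j.
  assert (G : forall n : nat, forall a, h a + Z.of_nat n * d <= h (a + Z.of_nat n)).
  { induction n; intros a. simpl. rewrite !Z.add_0_r; lia.
    specialize (IHn (a+1)). specialize (Hs a). rewrite Nat2Z.inj_succ.
    replace (a + Z.succ (Z.of_nat n)) with (a + 1 + Z.of_nat n) by lia.
    nia. }
  specialize (G (Z.to_nat (p - 1)) (j+1)). rewrite Z2Nat.id in G by lia.
  replace (j + 1 + (p - 1)) with (j + p) in G by lia. rewrite Hper in G.
  specialize (Hs j). nia.
Qed.

Lemma per_aff N x : periodic N x -> forall k a, x (a + k * Z.of_nat N) = x a + k * Z.of_nat N.
Proof. intros Hp. apply per_k. exact Hp. Qed.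

Lemma no_descent_id N x : (1 <= N)%nat -> is_affine_perm N x ->
  (forall i, (i < N)%nat -> x (Z.of_nat i) < x (Z.of_nat i + 1)) -> forall j, x j = j.
Proof.
  intros HN Ha Hasc.
  pose proof Ha as [Hi [Hs [Hp Hsum]]].
  assert (Hp' : periodic N x) by exact Hp.
  assert (Hup : forall j, x j + 1 <= x (j + 1)).
  { intros j. destruct (decomp (Z.of_nat N) 0 j) as [r [k [Hr ->]]]; [lia|].
    rewrite per_aff; auto. replace (r + k * Z.of_nat N + 1) with ((r + 1) + k * Z.of_nat N) by lia.
    rewrite per_aff; auto. specialize (Hasc (Z.to_nat r) ltac:(lia)). rewrite Z2Nat.id in Hasc by lia. lia. }
  assert (Hstep : forall j, x (j + 1) = x j + 1).
  { apply (tele x 1 (Z.of_nat N)); [lia|auto|]. intros j. rewrite Hp. lia. }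
  assert (Hlin : forall j, x j = j + x 0).
  { intros j; induction j using Z.peano_ind; auto.
    - rewrite <- Z.add_1_r, Hstep, IHj. lia.
    - specialize (Hstep (Z.pred j)). replace (Z.pred j + 1) with j in Hstep by lia. lia. }
  pose proof (aff_window N x 1 HN Ha).
  rewrite (zsum_ext x (fun a => a + x 0)) in H by (intros; apply Hlin).
  rewrite zsum_plus, zsum_const in H. intros j. rewrite Hlin. nia.
Qed.

Lemma aff_sgen N x i : (3 <= N)%nat -> (i < N)%nat -> is_affine_perm N x ->
  is_affine_perm N (fun a => x (s_gen N i a)).
Proof.
  intros HN Hi Ha. pose proof Ha as [Hinj [Hs [Hp Hsum]]].
  apply (aff_of_window N _ (Z.of_nat i)); [lia| | | |].
  - intros a b E. apply Hinj in E. apply sgen_inj in E; auto; lia.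
  - intros y. destruct (Hs y) as [a Ha']. exists (s_gen N i a). rewrite sgen_invol; auto; lia.
  - apply periodic_sgen; auto; lia.
  - rewrite <- (aff_window N x (Z.of_nat i)); auto; [|lia].
    destruct N as [|[|M]]; [lia|lia|]. rewrite !zsum_SS.
    rewrite (sgen_u (S (S M)) i), (sgen_v (S (S M)) i) by lia.
    rewrite (zsum_ext (fun a => x (s_gen (S (S M)) i a)) x). lia.
    intros a Ha'. f_equal.
    destruct (sgen_cases (S (S M)) i a) as [[H _]|[[_ [H _]]|[_ [_ H]]]]; auto.
    + exfalso. apply (mod_window (Z.of_nat (S (S M))) (Z.of_nat i) (a - Z.of_nat i)); [lia|].
      replace (Z.of_nat i + (a - Z.of_nat i)) with a by lia. auto.
    + exfalso. apply (mod_window (Z.of_nat (S (S M))) (Z.of_nat i + 1) (a - Z.of_nat i - 1)); [lia|].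
      replace (Z.of_nat i + 1 + (a - Z.of_nat i - 1)) with a by lia. auto.
Qed.

Lemma word_exists N : (3 <= N)%nat -> forall n x, is_affine_perm N x -> Phi N x = Z.of_nat n ->
  exists w, valid_word N w /\ (forall j, word_perm N w j = x j) /\ length w = n.
Proof.
  intros HN n. induction n as [|n IH]; intros x Ha HP.
  - exists []. split; [constructor|]. split; [|reflexivity].
    simpl. intros j. symmetry. apply (no_descent_id N); auto; [lia|].
    intros i Hi. destruct (Z.lt_total (x (Z.of_nat i)) (x (Z.of_nat i + 1))) as [H|[H|H]]; auto.
    + destruct Ha as [Hinj _]. apply Hinj in H. lia.
    + exfalso. pose proof (Phi_step N x i HN (proj1 (proj2 (proj2 Ha))) Hi ltac:(lia)).
      destruct (Z.ltb_spec (x (Z.of_nat i)) (x (Z.of_nat i + 1))); [lia|].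
      pose proof (Phi_nonneg N (fun a => x (s_gen N i a))). lia.
  - destruct (classic (exists i, (i < N)%nat /\ x (Z.of_nat i + 1) < x (Z.of_nat i))) as [[i [Hi Hd]]|Hnd].
    + pose proof (Phi_step N x i HN (proj1 (proj2 (proj2 Ha))) Hi ltac:(lia)).
      destruct (Z.ltb_spec (x (Z.of_nat i)) (x (Z.of_nat i + 1))); [lia|].
      destruct (IH (fun a => x (s_gen N i a))) as [w [Hv [Hw Hl]]].
      { apply aff_sgen; auto. }
      { lia. }
      exists (w ++ [i]). split; [apply Forall_app; split; auto|split].
      * intros j. rewrite word_perm_app, Hw. rewrite sgen_invol; auto; lia.
      * rewrite length_app, Hl. simpl. lia.
    + exfalso.
      assert (Hid : forall j, x j = j).
      { apply (no_descent_id N); auto; [lia|]. intros i Hi.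
        destruct (Z.lt_total (x (Z.of_nat i)) (x (Z.of_nat i + 1))) as [H|[H|H]]; auto.
        - destruct Ha as [Hinj _]. apply Hinj in H. lia.
        - exfalso. apply Hnd. exists i. auto. }
      assert (x = fun j => j) by (apply functional_extensionality; auto). subst x.
      rewrite Phi_id in HP; lia.
Qed.

Lemma reduced_iff N w x : (3 <= N)%nat -> is_affine_perm N x ->
  (reduced_word N w x <-> represents N w x /\ Z.of_nat (length w) = Phi N x).
Proof.
  intros HN Ha.
  assert (Hlb : forall w', represents N w' x -> Phi N x <= Z.of_nat (length w')).
  { intros w' [Hv Hw]. assert (word_perm N w' = x) by (apply functional_extensionality; auto).
    rewrite <- H. apply lower_bound; auto. }
  destruct (word_exists N HN (Z.to_nat (Phi N x)) x Ha) as [w0 [Hv0 [Hw0 Hl0]]].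
  { rewrite Z2Nat.id; auto. apply Phi_nonneg. }
  assert (R0 : represents N w0 x) by (split; auto).
  split.
  - intros [Hr Hmin]. split; auto. specialize (Hmin w0 R0). specialize (Hlb w Hr).
    pose proof (Phi_nonneg N x). lia.
  - intros [Hr Hl]. split; auto. intros w' Hr'. specialize (Hlb w' Hr'). lia.
Qed.


Definition IsG (x : Z -> Z) (j m : Z) : Prop := j <= x m /\ forall a, a < m -> x a < j.

Lemma IsG_unique x j m m' : IsG x j m -> IsG x j m' -> m = m'.
Proof.
  intros [H1 H2] [H3 H4]. destruct (Z.lt_total m m') as [H|[H|H]]; auto.
  - specialize (H4 m H). lia.
  - specialize (H2 m' H). lia.
Qed.

Lemma IsG_ext x x' j m : (forall a, x a = x' a) -> IsG x j m -> IsG x' j m.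
Proof. intros E [H1 H2]. split. rewrite <- E; auto. intros a Ha. rewrite <- E; auto. Qed.

Lemma IsG_step N y i j m : (3 <= N)%nat -> periodic N y -> (i < N)%nat ->
  y (Z.of_nat i) < y (Z.of_nat i + 1) -> IsG y j m ->
  IsG (fun a => y (s_gen N i a)) j (f_gen N i m).
Proof.
  intros HN Hp Hi Hasc [H1 H2].
  assert (Hn : 3 <= Z.of_nat N) by lia.
  assert (Asc : forall k, k mod (Z.of_nat N) = (Z.of_nat i) mod (Z.of_nat N) -> y k < y (k + 1)).
  { intros k Hk. apply mod_eq_iff in Hk; [|lia]. destruct Hk as [t ->].
    pose proof (per_aff N y Hp t (Z.of_nat i)). pose proof (per_aff N y Hp t ((Z.of_nat i)+1)).
    replace ((Z.of_nat i) + t * (Z.of_nat N) + 1) with ((Z.of_nat i) + 1 + t * (Z.of_nat N)) by lia. lia. }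
  unfold f_gen.
  destruct (Z.eqb_spec (m mod (Z.of_nat N)) (((Z.of_nat i) + 1) mod (Z.of_nat N))) as [Em|Em].
  - assert (Em1 : (m - 1) mod (Z.of_nat N) = (Z.of_nat i) mod (Z.of_nat N)).
    { apply (mod_shift _ _ _ (-1)) in Em; [|lia]. replace (m + -1) with (m - 1) in Em by lia.
      rewrite Em. f_equal; lia. }
    assert (Hs : s_gen N i (m - 1) = m).
    { destruct (sgen_cases N i (m-1)) as [[_ H]|[[H _]|[H _]]]; try lia; contradiction. }
    split.
    + rewrite Hs. auto.
    + intros a Ha. apply H2. pose proof (sgen_le N i a). lia.
  - destruct (Z.eq_dec (m mod (Z.of_nat N)) ((Z.of_nat i) mod (Z.of_nat N))) as [Eu|Eu].
    + assert (Hs : s_gen N i m = m + 1).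
      { destruct (sgen_cases N i m) as [[_ H]|[[H _]|[H _]]]; try lia; contradiction. }
      split.
      * rewrite Hs. specialize (Asc m Eu). lia.
      * intros a Ha. apply H2.
        destruct (sgen_cases N i a) as [[Ea H]|[[_ [_ H]]|[_ [_ H]]]]; rewrite H; try lia.
        rewrite <- Eu in Ea. apply mod_eq_iff in Ea; [|lia]. destruct Ea as [k Hk].
        assert (k <= -1) by nia. nia.
    + assert (Hs : s_gen N i m = m).
      { destruct (sgen_cases N i m) as [[H _]|[[_ [H _]]|[_ [_ H]]]]; auto; contradiction. }
      split.
      * rewrite Hs. auto.
      * intros a Ha. apply H2.
        destruct (sgen_cases N i a) as [[Ea H]|[[_ [_ H]]|[_ [_ H]]]]; rewrite H; try lia.
        destruct (Z.eq_dec (a + 1) m); [|lia]. subst m. exfalso. apply Em. apply mod_shift; auto. lia.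
Qed.

Lemma fiber_lemma N w : (3 <= N)%nat -> valid_word N w ->
  Z.of_nat (length w) = Phi N (word_perm N w) -> forall j, IsG (word_perm N w) j (f_word N w j).
Proof.
  intros HN. induction w as [|i u IH] using rev_ind; intros Hv Hl j.
  - simpl. split; [lia|]. intros; auto.
  - unfold valid_word in Hv. apply Forall_app in Hv. destruct Hv as [Hu Hi]. inversion Hi; subst.
    assert (Hper : periodic N (word_perm N u)) by (apply word_perm_periodic; lia).
    assert (Hne : word_perm N u (Z.of_nat i) <> word_perm N u (Z.of_nat i + 1)).
    { intros E. apply word_perm_inj in E; lia. }
    rewrite word_perm_app_f in Hl. rewrite Phi_step in Hl; auto.
    rewrite length_app in Hl. simpl in Hl.
    pose proof (lower_bound N u HN Hu).
    destruct (Z.ltb_spec (word_perm N u (Z.of_nat i)) (word_perm N u (Z.of_nat i + 1))) as [Hasc|Hd]; [|lia].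
    rewrite word_perm_app_f, f_word_app.
    apply IsG_step; auto. apply IH; auto. lia.
Qed.


Definition LRmax (x : Z -> Z) (m : Z) : Prop := forall a, a < m -> x a < x m.

Lemma L1 x y G m : (forall j, IsG x j (G j)) -> (forall j, IsG y j (G j)) -> LRmax x m ->
  x m <= y m /\ LRmax y m.
Proof.
  intros Hx Hy Hm.
  destruct (Hx (x m)) as [A1 A2].
  assert (E : G (x m) = m).
  { destruct (Z.lt_total (G (x m)) m) as [H|[H|H]]; auto.
    - specialize (Hm _ H). lia.
    - specialize (A2 m H). lia. }
  destruct (Hy (x m)) as [B1 B2]. rewrite E in B1, B2.
  split; auto. intros a Ha. specialize (B2 a Ha). lia.
Qed.

Lemma L2 x a b : avoids321 x -> (forall a b, x a = x b -> a = b) -> ~ LRmax x a -> a < b -> x a < x b.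
Proof.
  intros Hav Hinj Hn Hab.
  destruct (classic (exists c, c < a /\ x a <= x c)) as [[c [Hc Hxc]]|Hno].
  - destruct (Z.lt_total (x a) (x b)) as [H|[H|H]]; auto.
    + apply Hinj in H. lia.
    + exfalso. apply Hav. exists c, a, b. split; [lia|split;[lia|]].
      assert (x c <> x a) by (intros E; apply Hinj in E; lia). lia.
  - exfalso. apply Hn. intros c Hc. destruct (Z.lt_total (x c) (x a)) as [H|[H|H]]; auto.
    + apply Hinj in H. lia.
    + exfalso. apply Hno. exists c. split; auto. lia.
Qed.

Lemma L3 N x p k : periodic N x -> ~ LRmax x p -> ~ LRmax x (p + k * Z.of_nat N).
Proof.
  intros Hp Hn H. apply Hn. intros a Ha. specialize (H (a + k * Z.of_nat N) ltac:(lia)).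
  rewrite !(per_aff N x Hp) in H. lia.
Qed.

Lemma no_less N x y G : (3 <= N)%nat -> is_affine_perm N x -> is_affine_perm N y ->
  avoids321 x -> avoids321 y -> (forall j, IsG x j (G j)) -> (forall j, IsG y j (G j)) ->
  forall q, ~ LRmax x q -> x q < y q -> False.
Proof.
  intros HN Hax Hay Fx Fy Gx Gy.
  pose proof Hax as [Ix [Sx [Px _]]]. pose proof Hay as [Iy [Sy [Py _]]].
  assert (Px' : periodic N x) by exact Px. assert (Py' : periodic N y) by exact Py.
  assert (Eq : forall m, LRmax x m -> x m = y m).
  { intros m H. destruct (L1 x y G m Gx Gy H) as [H1 H2]. destruct (L1 y x G m Gy Gx H2). lia. }
  assert (NLy : forall m, ~ LRmax x m -> ~ LRmax y m).
  { intros m H H'. apply H. apply (L1 y x G m Gy Gx H'). }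
  assert (Prop1 : forall n : nat, forall q p, (Z.to_nat (p - q) <= n)%nat -> q < p ->
     ~ LRmax x q -> ~ LRmax x p -> x q < y q -> y p <= x p -> False).
  { induction n as [|n IH]; intros q p Hn Hqp Hq Hp Hxy Hyx; [lia|].
    destruct (Sx (y q)) as [r Hr].
    assert (Hrn : ~ LRmax x r).
    { intros Hl. pose proof (Eq r Hl). rewrite Hr in H. apply Iy in H. subst r. contradiction. }
    assert (Hqr : q < r).
    { destruct (Z.lt_total q r) as [H|[H|H]]; auto.
      - subst r. lia.
      - pose proof (L2 x r q Fx Ix Hrn H). lia. }
    pose proof (L2 y q r Fy Iy (NLy q Hq) Hqr) as Hyqr.
    destruct (Z.lt_total p r) as [H|[H|H]].
    - pose proof (L2 x p r Fx Ix Hp H). pose proof (L2 y q p Fy Iy (NLy q Hq) Hqp). lia.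
    - subst r. pose proof (L2 y q p Fy Iy (NLy q Hq) Hqp). lia.
    - apply (IH r p); auto; lia. }
  intros q Hq Hxy.
  assert (All : forall p, ~ LRmax x p -> x p < y p).
  { intros p Hp. set (k := Z.abs (q - p) + 1).
    assert (Hk : q < p + k * Z.of_nat N) by (unfold k; nia).
    destruct (Z_lt_le_dec (x (p + k * Z.of_nat N)) (y (p + k * Z.of_nat N))) as [Hlt|Hge].
    - rewrite !per_aff in Hlt; auto. lia.
    - exfalso. apply (Prop1 (Z.to_nat (p + k * Z.of_nat N - q)) q (p + k * Z.of_nat N)); auto.
      apply L3; auto. }
  destruct (decomp (Z.of_nat N) 1 q) as [r [k [Hr Hqe]]]; [lia|].
  assert (Hrn : ~ LRmax x r).
  { replace r with (q + (-k) * Z.of_nat N) by lia. apply L3; auto. }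
  pose proof (aff_window N x 1 ltac:(lia) Hax). pose proof (aff_window N y 1 ltac:(lia) Hay).
  assert (zsum x 1 N < zsum y 1 N); [|lia].
  apply zsum_lt.
  - intros a _. destruct (classic (LRmax x a)) as [Hl|Hl].
    + rewrite Eq; auto. lia.
    + specialize (All a Hl). lia.
  - exists r. split; [lia|]. apply All; auto.
Qed.

Lemma fc_unique N x y G : (3 <= N)%nat -> is_affine_perm N x -> is_affine_perm N y ->
  avoids321 x -> avoids321 y -> (forall j, IsG x j (G j)) -> (forall j, IsG y j (G j)) ->
  forall j, x j = y j.
Proof.
  intros HN Hax Hay Fx Fy Gx Gy j.
  destruct (classic (LRmax x j)) as [H|H].
  - destruct (L1 x y G j Gx Gy H) as [H1 H2]. destruct (L1 y x G j Gy Gx H2). lia.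
  - assert (Hy : ~ LRmax y j) by (intros H'; apply H; apply (L1 y x G j Gy Gx H')).
    destruct (Z.lt_total (x j) (y j)) as [E|[E|E]]; auto.
    + exfalso. apply (no_less N x y G HN Hax Hay Fx Fy Gx Gy j H E).
    + exfalso. apply (no_less N y x G HN Hay Hax Fy Fx Gy Gx j Hy E).
Qed.

Definition erep (n c v : Z) : Z := c + 1 + (v - c - 1) mod n.

Lemma e_perm N x c : (1 <= N)%nat -> (forall a b, x a = x b -> a = b) -> periodic N x ->
  zsum (fun a => erep (Z.of_nat N) c (x a)) (c + 1) N = zsum (fun a => a) (c + 1) N.
Proof.
  intros HN Hi Hp. apply zsum_perm.
  - intros a _. unfold erep. pose proof (Z.mod_pos_bound (x a - c - 1) (Z.of_nat N) ltac:(lia)). lia.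
  - intros a b Ha Hb E. unfold erep in E.
    assert (E' : (x a - c - 1) mod Z.of_nat N = (x b - c - 1) mod Z.of_nat N) by lia.
    apply mod_eq_iff in E'; [|lia]. destruct E' as [k Hk].
    assert (x a = x (b + k * Z.of_nat N)) by (rewrite per_aff; auto; lia).
    apply Hi in H. assert (k = 0) by nia. subst k. lia.
Qed.

Lemma window_up N x c : (1 <= N)%nat -> is_affine_perm N x ->
  (forall a, c < a <= c + Z.of_nat N -> x a <= c + Z.of_nat N) ->
  forall a, c < a <= c + Z.of_nat N -> c < x a.
Proof.
  intros HN Ha H a Hwin.
  pose proof Ha as [Hi [_ [Hp _]]].
  pose proof (e_perm N x c HN Hi Hp) as Ep. pose proof (aff_window N x (c+1) HN Ha) as Ew.
  assert (Hle : forall a, c + 1 <= a < c + 1 + Z.of_nat N -> x a <= erep (Z.of_nat N) c (x a)).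
  { intros b Hb. specialize (H b ltac:(lia)). unfold erep.
    pose proof (Z.div_mod (x b - c - 1) (Z.of_nat N) ltac:(lia)).
    pose proof (Z.mod_pos_bound (x b - c - 1) (Z.of_nat N) ltac:(lia)).
    set (q := (x b - c - 1) / Z.of_nat N) in *. set (r := (x b - c - 1) mod Z.of_nat N) in *.
    assert (q <= 0) by nia. nia. }
  pose proof (zsum_eq_pt _ _ _ _ Hle ltac:(lia) a ltac:(lia)).
  unfold erep in H0. pose proof (Z.mod_pos_bound (x a - c - 1) (Z.of_nat N) ltac:(lia)). lia.
Qed.

Lemma window_dn N x c : (1 <= N)%nat -> is_affine_perm N x ->
  (forall a, c < a <= c + Z.of_nat N -> c < x a) ->
  forall a, c < a <= c + Z.of_nat N -> x a <= c + Z.of_nat N.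
Proof.
  intros HN Ha H a Hwin.
  pose proof Ha as [Hi [_ [Hp _]]].
  pose proof (e_perm N x c HN Hi Hp) as Ep. pose proof (aff_window N x (c+1) HN Ha) as Ew.
  assert (Hle : forall a, c + 1 <= a < c + 1 + Z.of_nat N -> erep (Z.of_nat N) c (x a) <= x a).
  { intros b Hb. specialize (H b ltac:(lia)). unfold erep.
    pose proof (Z.div_mod (x b - c - 1) (Z.of_nat N) ltac:(lia)).
    pose proof (Z.mod_pos_bound (x b - c - 1) (Z.of_nat N) ltac:(lia)).
    set (q := (x b - c - 1) / Z.of_nat N) in *. set (r := (x b - c - 1) mod Z.of_nat N) in *.
    assert (0 <= q) by nia. nia. }
  pose proof (zsum_eq_pt _ _ _ _ Hle ltac:(lia) a ltac:(lia)).
  unfold erep in H0. pose proof (Z.mod_pos_bound (x a - c - 1) (Z.of_nat N) ltac:(lia)). lia.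
Qed.

Lemma flow1 N x c : (1 <= N)%nat -> is_affine_perm N x ->
  (forall a, a <= c -> x a <= c) -> forall b, c < b -> c < x b.
Proof.
  intros HN Ha H b Hb.
  pose proof Ha as [_ [_ [Hp _]]].
  assert (W : forall a, c - Z.of_nat N < a <= c - Z.of_nat N + Z.of_nat N -> c - Z.of_nat N < x a).
  { apply window_up; auto. intros a Ha'. specialize (H a ltac:(lia)). lia. }
  destruct (decomp (Z.of_nat N) (c - Z.of_nat N + 1) b) as [r [k [Hr ->]]]; [lia|].
  rewrite per_aff; auto. specialize (W r ltac:(lia)). assert (1 <= k) by nia. nia.
Qed.

Lemma flow2 N x c : (1 <= N)%nat -> is_affine_perm N x ->
  (forall b, c < b -> c < x b) -> forall a, a <= c -> x a <= c.
Proof.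
  intros HN Ha H a Ha0.
  pose proof Ha as [_ [_ [Hp _]]].
  assert (W : forall a, c < a <= c + Z.of_nat N -> x a <= c + Z.of_nat N).
  { apply window_dn; auto. intros b Hb. apply H. lia. }
  destruct (decomp (Z.of_nat N) (c + 1) a) as [r [k [Hr ->]]]; [lia|].
  rewrite per_aff; auto. specialize (W r ltac:(lia)). assert (k <= -1) by nia. nia.
Qed.

Lemma sum_congr N x : (1 <= N)%nat -> (forall a b, x a = x b -> a = b) -> periodic N x ->
  exists K, zsum x 1 N = zsum (fun a => a) 1 N + K * Z.of_nat N.
Proof.
  intros HN Hi Hp. pose proof (e_perm N x 0 HN Hi Hp) as E. simpl in E.
  destruct (zsum_mult (fun a => x a - erep (Z.of_nat N) 0 (x a)) (Z.of_nat N) 1 N) as [K HK].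
  { intros a _. unfold erep. exists ((x a - 0 - 1) / Z.of_nat N).
    pose proof (Z.div_mod (x a - 0 - 1) (Z.of_nat N) ltac:(lia)). lia. }
  exists K. rewrite zsum_minus in HK. lia.
Qed.


Lemma choiceZ (R : Z -> Z -> Prop) : (forall a, exists b, R a b) -> exists f, forall a, R a (f a).
Proof.
  intros H. exists (fun a => proj1_sig (constructive_indefinite_description _ (H a))).
  intros a. exact (proj2_sig (constructive_indefinite_description _ (H a))).
Qed.

Lemma ivt (h : Z -> Z) m : forall d : nat, forall lo hi, hi - lo = Z.of_nat d -> lo < hi ->
  h lo <= m -> m < h hi -> exists t, lo <= t < hi /\ h t <= m < h (t + 1).
Proof.
  induction d; intros lo hi Hd Hlt Hlo Hhi; [lia|].
  destruct (Z_lt_le_dec m (h (lo + 1))) as [H|H].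
  - exists lo. split; [lia|]. lia.
  - destruct (Z.eq_dec (lo + 1) hi) as [E|E]; [subst hi; lia|].
    destruct (IHd (lo + 1) hi ltac:(lia) ltac:(lia) H Hhi) as [t [Ht1 Ht2]].
    exists t. split; [lia|auto].
Qed.

Lemma ivt' (h : Z -> Z) m lo hi : lo < hi -> h lo <= m -> m < h hi ->
  exists t, lo <= t < hi /\ h t <= m < h (t + 1).
Proof. intros. apply (ivt h m (Z.to_nat (hi - lo))); auto; lia. Qed.

Definition stepf (h : Z -> Z) := forall a, h a = h (a - 1) \/ h a = h (a - 1) + 1.

Lemma stepf_mono h : stepf h -> forall a b, a <= b -> h a <= h b.
Proof.
  intros Hs a b Hab.
  assert (G : forall d : nat, h a <= h (a + Z.of_nat d)).
  { induction d; [rewrite Z.add_0_r; lia|]. specialize (Hs (a + Z.of_nat (S d))).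
    replace (a + Z.of_nat (S d) - 1) with (a + Z.of_nat d) in Hs by lia. lia. }
  specialize (G (Z.to_nat (b - a))). rewrite Z2Nat.id in G by lia. replace (a + (b - a)) with b in G by lia. auto.
Qed.

Lemma stepf_surj (n : Z) h k : 0 < n -> 1 <= k -> stepf h -> (forall a, h (a + n) = h a + k) ->
  forall t, exists v, h v = t /\ h (v - 1) = t - 1.
Proof.
  intros Hn Hk Hs Hp t.
  set (K := Z.abs (t - h 0) + 1).
  pose proof (per_k n h k Hp K 0) as E1. pose proof (per_k n h k Hp (-K) 0) as E2.
  simpl in E1, E2.
  destruct (ivt' h (t - 1) (-K * n) (K * n)) as [s [Hs1 Hs2]].
  - unfold K; nia.
  - rewrite E2. unfold K; nia.
  - rewrite E1. unfold K; nia.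
  - exists (s + 1). replace (s + 1 - 1) with s by lia. specialize (Hs (s+1)).
    replace (s + 1 - 1) with s in Hs by lia. lia.
Qed.

Fixpoint cntR (p : Z -> bool) (k : nat) : Z :=
  match k with O => 0 | S k' => cntR p k' + (if p (Z.of_nat (S k')) then 1 else 0) end.

Definition cnt (N : nat) (p : Z -> bool) (a : Z) : Z :=
  cntR p N * (a / Z.of_nat N) + cntR p (Z.to_nat (a mod Z.of_nat N)).

Lemma cntR_zsum p k : cntR p k = zsum (fun a => if p a then 1 else 0) 1 k.
Proof.
  induction k; auto. simpl cntR. rewrite zsum_last, IHk. replace (1 + Z.of_nat k) with (Z.of_nat (S k)) by lia. reflexivity.
Qed.

Lemma cnt_step N p : (1 <= N)%nat -> (forall a, p (a + Z.of_nat N) = p a) ->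
  forall a, cnt N p a = cnt N p (a - 1) + (if p a then 1 else 0).
Proof.
  intros HN Hp a. unfold cnt.
  set (n := Z.of_nat N) in *.
  pose proof (Z.div_mod (a - 1) n ltac:(lia)) as Hdm. pose proof (Z.mod_pos_bound (a - 1) n ltac:(lia)) as Hb.
  set (q := (a - 1) / n) in *. set (r := (a - 1) mod n) in *.
  assert (Hpa : p a = p (r + 1)).
  { replace a with ((r + 1) + q * n) by lia. apply per_kb; auto. }
  destruct (Z.eq_dec (r + 1) n) as [E|E].
  - assert (Ha1 : a / n = q + 1).
    { symmetry. apply Z.div_unique with 0; lia. }
    assert (Ha2 : a mod n = 0).
    { symmetry. apply Z.mod_unique with (q + 1); lia. }
    rewrite Ha1, Ha2. simpl (cntR p (Z.to_nat 0)).
    destruct N as [|N']; [lia|].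
    assert (Z.to_nat r = N') by (unfold n in E; lia). rewrite H.
    simpl cntR. rewrite Hpa, E. unfold n. change (Z.of_nat (S N')) with (Z.pos (Pos.of_succ_nat N')). destruct (p (Z.pos _)); ring.
  - assert (Ha1 : a / n = q).
    { symmetry. apply Z.div_unique with (r + 1); lia. }
    assert (Ha2 : a mod n = r + 1).
    { symmetry. apply Z.mod_unique with q; lia. }
    rewrite Ha1, Ha2. replace (Z.to_nat (r + 1)) with (S (Z.to_nat r)) by lia.
    simpl cntR. rewrite Hpa. replace (Z.pos (Pos.of_succ_nat (Z.to_nat r))) with (r + 1) by lia. ring.
Qed.

Lemma cnt_per N p a : (1 <= N)%nat -> cnt N p (a + Z.of_nat N) = cnt N p a + cntR p N.
Proof.
  intros HN. unfold cnt. rewrite div_plus_n by lia. rewrite mod_add_n by lia. ring.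
Qed.


Section Constr.
Variable N : nat.
Hypothesis HN : (3 <= N)%nat.
Variable g : Z -> Z.
Hypothesis Hg : is_NDPF1 N g.
Variable T : Z -> Z.
Hypothesis Ts : forall m, g (T m) <= m < g (T m + 1).

Lemma greg : forall i, g i <= i. Proof. apply Hg. Qed.
Lemma gmono : forall i j, i <= j -> g i <= g j. Proof. apply Hg. Qed.
Lemma gper : periodic N g. Proof. intros a. apply Hg. Qed.

Lemma galois : forall j m, g j <= m <-> j <= T m.
Proof.
  intros j m. split; intros H.
  - destruct (Z_le_gt_dec j (T m)); auto. pose proof (gmono (T m + 1) j ltac:(lia)). pose proof (Ts m). lia.
  - pose proof (gmono j (T m) H). pose proof (Ts m). lia.
Qed.

Lemma T_ge : forall m, m <= T m.
Proof. intros m. apply galois. apply greg. Qed.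

Lemma T_mono : forall m m', m <= m' -> T m <= T m'.
Proof. intros. apply galois. pose proof (Ts m). lia. Qed.

Lemma T_per : forall m, T (m + Z.of_nat N) = T m + Z.of_nat N.
Proof.
  intros m. pose proof (Ts m) as H1. pose proof (Ts (m + Z.of_nat N)) as H2.
  pose proof (gper (T m)) as P1. pose proof (gper (T m + 1)) as P2.
  replace (T m + 1 + Z.of_nat N) with (T m + Z.of_nat N + 1) in P2 by lia.
  assert (A : T m + Z.of_nat N <= T (m + Z.of_nat N)) by (apply galois; lia).
  assert (B : T (m + Z.of_nat N) <= T m + Z.of_nat N).
  { destruct (Z_le_gt_dec (T (m + Z.of_nat N)) (T m + Z.of_nat N)); auto.
    pose proof (gmono (T m + Z.of_nat N + 1) (T (m + Z.of_nat N)) ltac:(lia)). lia. }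
  lia.
Qed.

Definition Lb (m : Z) : bool := Z.eqb (g (T m)) m.

Lemma Lb_true m : Lb m = true <-> g (T m) = m.
Proof. unfold Lb. apply Z.eqb_eq. Qed.

Lemma Lb_g j : Lb (g j) = true.
Proof.
  apply Lb_true. pose proof (Ts (g j)). assert (j <= T (g j)) by (apply galois; lia).
  pose proof (gmono _ _ H0). lia.
Qed.

Lemma Lb_per m : Lb (m + Z.of_nat N) = Lb m.
Proof.
  unfold Lb. rewrite T_per, gper. destruct (Z.eqb_spec (g (T m)) m); destruct (Z.eqb_spec (g (T m) + Z.of_nat N) (m + Z.of_nat N)); auto; lia.
Qed.

Definition cL (a : Z) : Z := cnt N Lb a.
Definition kL : Z := cntR Lb N.

Lemma cL_step a : cL a = cL (a - 1) + (if Lb a then 1 else 0).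
Proof. unfold cL. apply cnt_step; [lia|]. apply Lb_per. Qed.

Lemma cL_per a : cL (a + Z.of_nat N) = cL a + kL.
Proof. unfold cL, kL. apply cnt_per; lia. Qed.

Lemma cL_flat : forall d : nat, forall a b, b - a = Z.of_nat d ->
  (forall m, a < m <= b -> Lb m = false) -> cL b = cL a.
Proof.
  induction d; intros a b Hd H.
  - replace b with a by lia. auto.
  - rewrite cL_step. rewrite H by lia. rewrite (IHd a (b - 1)); [lia|lia|]. intros; apply H; lia.
Qed.

Lemma cL_jump v : g v < g (v + 1) -> cL (g (v + 1)) = cL (g v) + 1.
Proof.
  intros Hlt. rewrite cL_step. rewrite Lb_g.
  rewrite (cL_flat (Z.to_nat (g (v+1) - 1 - g v)) (g v)); [lia|lia|].
  intros m Hm. destruct (Lb m) eqn:E; auto. exfalso. apply Lb_true in E.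
  destruct (Z_le_gt_dec (v + 1) (T m)).
  - pose proof (gmono _ _ l). lia.
  - pose proof (gmono (T m) v ltac:(lia)). lia.
Qed.

Definition cQ (a : Z) : Z := a - cL a.
Definition cW (v : Z) : Z := v - cL (g (v + 1)).
Definition kQ : Z := Z.of_nat N - kL.

Lemma cQ_step a : cQ a = cQ (a - 1) + (if Lb a then 0 else 1).
Proof. unfold cQ. rewrite cL_step. destruct (Lb a); lia. Qed.

Lemma cW_step v : cW v = cW (v - 1) + (if Z.eqb (g (v + 1)) (g v) then 1 else 0).
Proof.
  unfold cW. replace (v - 1 + 1) with v by lia.
  destruct (Z.eqb_spec (g (v + 1)) (g v)) as [E|E].
  - rewrite E. lia.
  - rewrite cL_jump. lia. pose proof (gmono v (v+1) ltac:(lia)). lia.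
Qed.

Lemma cQ_stepf : stepf cQ.
Proof. intros a. rewrite cQ_step. destruct (Lb a); lia. Qed.

Lemma cW_stepf : stepf cW.
Proof. intros a. rewrite cW_step. destruct (_ =? _); lia. Qed.

Lemma cQ_per a : cQ (a + Z.of_nat N) = cQ a + kQ.
Proof. unfold cQ, kQ. rewrite cL_per. lia. Qed.

Lemma cW_per v : cW (v + Z.of_nat N) = cW v + kQ.
Proof.
  unfold cW, kQ. replace (v + Z.of_nat N + 1) with (v + 1 + Z.of_nat N) by lia.
  rewrite gper, cL_per. lia.
Qed.

Lemma cQ_strict q a : Lb q = false -> a < q -> cQ a < cQ q.
Proof.
  intros Hq Ha. pose proof (cQ_step q) as E. rewrite Hq in E.
  pose proof (stepf_mono cQ cQ_stepf a (q - 1) ltac:(lia)). lia.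
Qed.

Lemma cW_strict v v' : g (v' + 1) = g v' -> v < v' -> cW v < cW v'.
Proof.
  intros Hv Ha. pose proof (cW_step v') as E. rewrite Hv, Z.eqb_refl in E.
  pose proof (stepf_mono cW cW_stepf v (v' - 1) ltac:(lia)). lia.
Qed.

Lemma W_uniq v v' : g (v + 1) = g v -> g (v' + 1) = g v' -> cW v = cW v' -> v = v'.
Proof.
  intros H1 H2 E. destruct (Z.lt_total v v') as [H|[H|H]]; auto.
  - pose proof (cW_strict v v' H2 H). lia.
  - pose proof (cW_strict v' v H1 H). lia.
Qed.


Lemma zsum_scale c f a n : zsum (fun b => c * f b) a n = c * zsum f a n.
Proof. revert a; induction n; intros a; simpl; [lia|]. rewrite IHn. ring. Qed.

Hypothesis HQ : exists q, Lb q = false.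

Lemma kQ_pos : 1 <= kQ.
Proof.
  destruct HQ as [q Hq]. pose proof (cQ_step q) as E. rewrite Hq in E.
  pose proof (cQ_per (q - 1)). pose proof (stepf_mono cQ cQ_stepf q (q - 1 + Z.of_nat N) ltac:(lia)). lia.
Qed.

Lemma phi_exists t : exists v, g (v + 1) = g v /\ cW v = t.
Proof.
  destruct (stepf_surj (Z.of_nat N) cW kQ ltac:(lia) kQ_pos cW_stepf cW_per t) as [v [H1 H2]].
  exists v. split; auto. pose proof (cW_step v). destruct (Z.eqb_spec (g (v+1)) (g v)); auto. lia.
Qed.

Lemma cQ_surj t : exists q, Lb q = false /\ cQ q = t.
Proof.
  destruct (stepf_surj (Z.of_nat N) cQ kQ ltac:(lia) kQ_pos cQ_stepf cQ_per t) as [v [H1 H2]].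
  exists v. split; auto. pose proof (cQ_step v). destruct (Lb v); auto. lia.
Qed.

Variable phi : Z -> Z.
Hypothesis phis : forall t, g (phi t + 1) = g (phi t) /\ cW (phi t) = t.

Definition xs (s a : Z) : Z := if Lb a then T a else phi (cQ a + s).

Lemma xs_L s a : Lb a = true -> xs s a = T a.
Proof. intros H. unfold xs. rewrite H. auto. Qed.

Lemma xs_Q s a : Lb a = false -> g (xs s a + 1) = g (xs s a) /\ cW (xs s a) = cQ a + s.
Proof. intros H. unfold xs. rewrite H. apply phis. Qed.

Lemma T_notW m : g (T m + 1) <> g (T m).
Proof. pose proof (Ts m). lia. Qed.

Lemma cQ_inj a b : Lb a = false -> Lb b = false -> cQ a = cQ b -> a = b.
Proof.
  intros Ha Hb E. destruct (Z.lt_total a b) as [H|[H|H]]; auto.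
  - pose proof (cQ_strict b a Hb H). lia.
  - pose proof (cQ_strict a b Ha H). lia.
Qed.

Lemma xs_inj s a b : xs s a = xs s b -> a = b.
Proof.
  intros E. destruct (Lb a) eqn:Ha; destruct (Lb b) eqn:Hb.
  - rewrite !xs_L in E by auto. apply Lb_true in Ha, Hb. rewrite <- Ha, <- Hb, E. auto.
  - rewrite xs_L in E by auto. destruct (xs_Q s b Hb) as [W _]. rewrite <- E in W. exfalso; apply (T_notW a); auto.
  - rewrite (xs_L s b) in E by auto. destruct (xs_Q s a Ha) as [W _]. rewrite E in W. exfalso; apply (T_notW b); auto.
  - destruct (xs_Q s a Ha) as [_ C1]. destruct (xs_Q s b Hb) as [_ C2]. rewrite E in C1.
    apply cQ_inj; auto. lia.
Qed.

Lemma xs_surj s v : exists a, xs s a = v.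
Proof.
  destruct (Z.eq_dec (g (v + 1)) (g v)) as [W|W].
  - destruct (cQ_surj (cW v - s)) as [q [Hq Cq]]. exists q.
    destruct (xs_Q s q Hq) as [W' C']. apply W_uniq; auto. lia.
  - exists (g v). rewrite xs_L by apply Lb_g.
    assert (A : v <= T (g v)) by (apply galois; lia).
    assert (B : T (g v) <= v).
    { destruct (Z_le_gt_dec (T (g v)) v); auto. pose proof (gmono (v+1) (T (g v)) ltac:(lia)).
      pose proof (Ts (g v)). pose proof (gmono v (v+1) ltac:(lia)). lia. }
    lia.
Qed.

Lemma xs_per s : periodic N (xs s).
Proof.
  intros a. destruct (Lb a) eqn:Ha.
  - rewrite !xs_L; auto. apply T_per. rewrite Lb_per; auto.
  - assert (Ha' : Lb (a + Z.of_nat N) = false) by (rewrite Lb_per; auto).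
    destruct (xs_Q s a Ha) as [W C]. destruct (xs_Q s _ Ha') as [W' C'].
    apply W_uniq; auto.
    + replace (xs s a + Z.of_nat N + 1) with ((xs s a + 1) + Z.of_nat N) by lia. rewrite !gper. lia.
    + rewrite cW_per, C', cQ_per. lia.
Qed.

Lemma xs_Qmono s a b : Lb a = false -> Lb b = false -> a < b -> xs s a < xs s b.
Proof.
  intros Ha Hb Hab. destruct (xs_Q s a Ha) as [Wa Ca]. destruct (xs_Q s b Hb) as [Wb Cb].
  pose proof (cQ_strict b a Hb Hab).
  destruct (Z_lt_le_dec (xs s a) (xs s b)); auto.
  pose proof (stepf_mono cW cW_stepf _ _ l). lia.
Qed.

Lemma xs_smono s a : Lb a = false -> xs s a < xs (s + 1) a.
Proof.
  intros Ha. destruct (xs_Q s a Ha) as [W1 C1]. destruct (xs_Q (s+1) a Ha) as [W2 C2].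
  destruct (Z_lt_le_dec (xs s a) (xs (s+1) a)); auto.
  pose proof (stepf_mono cW cW_stepf _ _ l). lia.
Qed.

Lemma xs_skQ s a : Lb a = false -> xs (s + kQ) a = xs s a + Z.of_nat N.
Proof.
  intros Ha. destruct (xs_Q s a Ha) as [W1 C1]. destruct (xs_Q (s + kQ) a Ha) as [W2 C2].
  apply W_uniq; auto.
  - replace (xs s a + Z.of_nat N + 1) with ((xs s a + 1) + Z.of_nat N) by lia. rewrite !gper. lia.
  - rewrite cW_per. lia.
Qed.

Definition Ssum (s : Z) : Z := zsum (xs s) 1 N.

Lemma S_incr s : Ssum s < Ssum (s + 1).
Proof.
  unfold Ssum. apply zsum_lt.
  - intros a _. destruct (Lb a) eqn:Ha.
    + rewrite !xs_L; auto. lia.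
    + pose proof (xs_smono s a Ha). lia.
  - destruct HQ as [q Hq]. destruct (decomp (Z.of_nat N) 1 q) as [r [k [Hr Hqe]]]; [lia|].
    exists r. split; auto. apply xs_smono.
    rewrite <- Hq. subst q. symmetry. apply per_kb. apply Lb_per.
Qed.

Lemma S_kQ s : Ssum (s + kQ) = Ssum s + kQ * Z.of_nat N.
Proof.
  unfold Ssum.
  rewrite (zsum_ext (xs (s + kQ)) (fun a => xs s a + (Z.of_nat N - Z.of_nat N * (if Lb a then 1 else 0)))).
  2:{ intros a _. destruct (Lb a) eqn:Ha.
      - rewrite !xs_L; auto. lia.
      - rewrite xs_skQ; auto. lia. }
  rewrite zsum_plus, zsum_minus, zsum_const, zsum_scale.
  rewrite <- cntR_zsum. fold kL. unfold kQ. ring.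
Qed.

Lemma S_congr s : exists K, Ssum s = zsum (fun a => a) 1 N + K * Z.of_nat N.
Proof. apply sum_congr; [lia| |]. intros a b; apply xs_inj. apply xs_per. Qed.

Lemma S_step s : Ssum (s + 1) = Ssum s + Z.of_nat N.
Proof.
  apply (tele Ssum (Z.of_nat N) kQ kQ_pos).
  - intros t. pose proof (S_incr t). destruct (S_congr t) as [K1 H1]. destruct (S_congr (t+1)) as [K2 H2].
    assert (K1 < K2) by nia. nia.
  - intros t. rewrite S_kQ. ring.
Qed.

Lemma s_exists : exists s, Ssum s = zsum (fun a => a) 1 N.
Proof.
  assert (Lin : forall s, Ssum s = Ssum 0 + s * Z.of_nat N).
  { intros s; induction s using Z.peano_ind.
    - lia.
    - rewrite <- Z.add_1_r, S_step, IHs. ring.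
    - pose proof (S_step (Z.pred s)). replace (Z.pred s + 1) with s in H by lia. nia. }
  destruct (S_congr 0) as [K HK]. exists (-K). rewrite Lin, HK. ring.
Qed.

Lemma xs_affine s : Ssum s = zsum (fun a => a) 1 N -> is_affine_perm N (xs s).
Proof.
  intros H. apply (aff_of_window N _ 1); [lia| | | |].
  - intros a b; apply xs_inj.
  - apply xs_surj.
  - apply xs_per.
  - exact H.
Qed.

Lemma xs_fc s : avoids321 (xs s).
Proof.
  assert (Lmono : forall a b, Lb a = true -> Lb b = true -> a < b -> xs s a < xs s b).
  { intros a b Ha Hb Hab. rewrite !xs_L by auto. pose proof (T_mono a b ltac:(lia)).
    assert (T a <> T b) by (intros E; apply Lb_true in Ha, Hb; rewrite E in Ha; lia). lia. }
  intros [a [b [c [Hab [Hbc [H1 H2]]]]]].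
  destruct (Lb a) eqn:Ea; destruct (Lb b) eqn:Eb; destruct (Lb c) eqn:Ec.
  - pose proof (Lmono a b Ea Eb Hab). lia.
  - pose proof (Lmono a b Ea Eb Hab). lia.
  - pose proof (Lmono a c Ea Ec ltac:(lia)). lia.
  - pose proof (xs_Qmono s b c Eb Ec Hbc). lia.
  - pose proof (Lmono b c Eb Ec Hbc). lia.
  - pose proof (xs_Qmono s a c Ea Ec ltac:(lia)). lia.
  - pose proof (xs_Qmono s a b Ea Eb Hab). lia.
  - pose proof (xs_Qmono s a b Ea Eb Hab). lia.
Qed.

Lemma key_ineq s : is_affine_perm N (xs s) -> forall q, Lb q = false -> g (xs s q) < q.
Proof.
  intros Ha q Hq.
  destruct (Z_lt_le_dec (xs s q) q) as [Hlt|Hge].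
  - destruct (Z_lt_le_dec (g (xs s q)) q) as [G|G]; auto. exfalso.
    assert (All : forall a, a <= q - 1 -> xs s a <= q - 1).
    { intros a Ha0. destruct (Lb a) eqn:Ea.
      - rewrite xs_L by auto.
        destruct (Z_lt_le_dec (T a) (xs s q)); [lia|].
        pose proof (gmono _ _ l). pose proof (Ts a). lia.
      - pose proof (xs_Qmono s a q Ea Hq ltac:(lia)). lia. }
    pose proof (flow1 N (xs s) (q - 1) ltac:(lia) Ha All q ltac:(lia)). lia.
  - exfalso.
    assert (All : forall b, q - 1 < b -> q - 1 < xs s b).
    { intros b Hb. destruct (Lb b) eqn:Eb.
      - rewrite xs_L by auto. pose proof (T_ge b). lia.
      - destruct (Z.eq_dec b q); [subst; lia|]. pose proof (xs_Qmono s q b Hq Eb ltac:(lia)). lia. }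
    pose proof (flow2 N (xs s) (q - 1) ltac:(lia) Ha All) as F.
    assert (Hm : g q <> q) by (intros E; rewrite <- E in Hq; rewrite Lb_g in Hq; discriminate).
    pose proof (greg q).
    specialize (F (g q) ltac:(lia)). rewrite xs_L in F by apply Lb_g.
    assert (q <= T (g q)) by (apply galois; lia). lia.
Qed.

Lemma xs_IsG s : is_affine_perm N (xs s) -> forall j, IsG (xs s) j (g j).
Proof.
  intros Ha j. split.
  - rewrite xs_L by apply Lb_g. apply galois. lia.
  - intros a Haj. destruct (Lb a) eqn:Ea.
    + rewrite xs_L by auto. destruct (Z_lt_le_dec (T a) j); auto.
      pose proof (gmono _ _ l). pose proof (Ts a). lia.
    + destruct (Z_lt_le_dec (xs s a) j); auto.
      pose proof (gmono _ _ l). pose proof (key_ineq s Ha a Ea). lia.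
Qed.

End Constr.


Lemma exists_fc N g : (3 <= N)%nat -> is_NDPF1 N g ->
  exists x, is_affine_perm N x /\ avoids321 x /\ forall j, IsG x j (g j).
Proof.
  intros HN Hg.
  assert (Hgp : periodic N g) by (intros a; apply Hg).
  destruct (choiceZ (fun m t => g t <= m < g (t + 1))) as [T Ts].
  { intros m. set (K := m - g m + 1).
    assert (HK : 1 <= K) by (unfold K; pose proof (proj1 Hg m); lia).
    pose proof (per_k _ g _ Hgp K m) as E.
    destruct (ivt' g m m (m + K * Z.of_nat N)) as [t [_ Ht]].
    - nia.
    - apply Hg.
    - rewrite E. unfold K. nia.
    - exists t; auto. }
  destruct (classic (exists q, Lb g T q = false)) as [HQ|HQ].
  - destruct (choiceZ (fun t v => g (v + 1) = g v /\ cW N g T v = t)) as [phi phis].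
    { intros t. apply (phi_exists N HN g Hg T Ts HQ). }
    destruct (s_exists N HN g Hg T Ts HQ phi phis) as [s Hs].
    pose proof (xs_affine N HN g Hg T Ts HQ phi phis s Hs) as Ha.
    exists (xs N g T phi s). split; auto. split.
    + apply (xs_fc N HN g Hg T Ts phi phis).
    + apply (xs_IsG N HN g Hg T Ts phi phis); auto.
  - assert (AllL : forall m, g (T m) = m).
    { intros m. apply (Lb_true g T). destruct (Lb g T m) eqn:E; auto. exfalso. apply HQ. exists m; auto. }
    assert (Up : forall j, g (j + 1) <= g j + 1).
    { intros j. set (m := g j + 1). pose proof (AllL m).
      destruct (Z_le_gt_dec (T m) j).
      - pose proof (proj1 (proj2 Hg) _ _ l). lia.
      - pose proof (proj1 (proj2 Hg) (j+1) (T m) ltac:(lia)). lia. }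
    assert (St : forall j, g (j + 1) = g j + 1).
    { intros j. pose proof (tele (fun a => - g a) (-1) (Z.of_nat N) ltac:(lia)) as Tl.
      assert (forall j, - g j + -1 <= - g (j + 1)) by (intros; specialize (Up j0); lia).
      assert (forall j, - g (j + Z.of_nat N) = - g j + Z.of_nat N * -1) by (intros; rewrite Hgp; lia).
      specialize (Tl H H0 j). simpl in Tl. lia. }
    assert (Lin : forall j, g j = j + g 0).
    { intros j; induction j using Z.peano_ind; auto.
      - rewrite <- Z.add_1_r, St, IHj. lia.
      - specialize (St (Z.pred j)). replace (Z.pred j + 1) with j in St by lia. lia. }
    assert (G0 : g 0 = 0).
    { destruct (Z.eq_dec (g 0) 0); auto. exfalso. apply (proj2 (proj2 (proj2 Hg))).
      exists (- g 0). split; [lia|]. intros i. rewrite Lin. lia. }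
    exists (fun j => j). split; [|split].
    + apply (aff_of_window N _ 1); [lia| | | |]; auto.
      * intros y; exists y; auto.
      * intros a; auto.
    + intros [a [b [c [H1 [H2 [H3 H4]]]]]]. lia.
    + intros j. rewrite Lin, G0, Z.add_0_r. split; [lia|]. intros; auto.
Qed.

Theorem mainTheorem5 (N : nat) (HN : (3 <= N)%nat) (g : Z -> Z) :
  is_NDPF1 N g ->
  exists x : Z -> Z,
    is_affine_perm N x /\ avoids321 x /\ in_fiber N g x /\
    forall y : Z -> Z,
      is_affine_perm N y -> avoids321 y -> in_fiber N g y ->
      forall j, y j = x j.
Proof.
  intros Hg. destruct (exists_fc N g HN Hg) as [x [Ha [Hf HG]]].
  exists x. split; auto. split; auto. split.
  - destruct (word_exists N HN (Z.to_nat (Phi N x)) x Ha) as [w [Hv [Hw Hl]]].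
    { rewrite Z2Nat.id; auto. apply Phi_nonneg. }
    assert (Ew : word_perm N w = x) by (apply functional_extensionality; auto).
    exists w. split.
    + apply reduced_iff; auto. split; [split; auto|]. rewrite Hl. rewrite Z2Nat.id; auto. apply Phi_nonneg.
    + intros j. pose proof (fiber_lemma N w HN Hv) as F.
      rewrite Ew in F. specialize (F ltac:(rewrite Hl, Z2Nat.id; auto; apply Phi_nonneg) j).
      apply (IsG_unique x j); auto.
  - intros y Hay Hfy [w [Hr Hfw]] j.
    apply reduced_iff in Hr; auto. destruct Hr as [[Hv Hw] Hl].
    assert (Ew : word_perm N w = y) by (apply functional_extensionality; auto).
    pose proof (fiber_lemma N w HN Hv) as F. rewrite Ew in F. specialize (F Hl).
    apply (fc_unique N y x g HN Hay Ha Hfy Hf); auto.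
    intros j'. rewrite <- Hfw. apply F.
Qed.
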